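(* Let $E$ be a vector bundle on $\mathbb{P}_1$ fitting into an exact sequence of vector bundles $$0\to E\to \bigoplus_{i=1}^r\mathcal{O}(a_i)\oplus\bigoplus_{j=1}^s\mathcal{O}(-b_j)\to\mathcal{O}\to 0$$ with $r\ge 0$, $s>0$, all $a_i\ge 0$ and all $b_j>0$. If the sequence does not split, then $\mathrm{rk}^+(E^* )=s-1$.
   Context: Every vector bundle $E$ on $\mathbb{P}_1$ splits as $\bigoplus\mathcal{O}(e_i)$; the multiset of the $e_i$ is the splitting type. $\mathrm{rk}^+(E)$ denotes the number of positive entries in the splitting type, i.e. $\#\{i: e_i>0\}$. *)

(* Defs.v *)
From HB Require Import structures.
From mathcomp Require Import all_boot all_order all_algebra.
Set Implicit Arguments. Unset Strict Implicit. Unset Printing Implicit Defensive.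
Import Order.TTheory GRing.Theory Num.Theory.
Local Open Scope ring_scope.

(* Model of split vector bundles on P^1 over an algebraically closed field k
   (Grothendieck: every bundle is (+)_i O(c_i)).  A bundle is given by its
   splitting type c : seq int.  A morphism (+)_i O(c_i) -> (+)_j O(d_j) is a
   matrix whose (j,i) entry is a homogeneous form of degree d_j - c_i in
   k[x,y] (zero if that degree is negative).  A form of degree n is stored as
   the polynomial p with sum_l p_l x^l y^(n-l), size p <= n+1. *)

Section Bundles.
Variable k : closedFieldType.

Definition is_form (d : int) (p : {poly k}) : bool :=
  match d with Posz n => (size p <= n.+1)%N | Negz _ => p == 0 end.

Definition is_bundle_map (c d : seq int) (M : 'M[{poly k}]_(size d, size c)) :=
  forall (j : 'I_(size d)) (i : 'I_(size c)), is_form (d`_j - c`_i) (M j i).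

Definition heval (n : int) (p : {poly k}) (x y : k) : k :=
  \sum_(l < (absz n).+1) p`_l * x ^+ l * y ^+ (absz n - l).

Definition fiber {c d : seq int} (M : 'M[{poly k}]_(size d, size c)) (x y : k)
  : 'M[k]_(size d, size c) :=
  \matrix_(j, i) heval (d`_j - c`_i) (M j i) x y.

Definition short_exact (e f g : seq int)
  (iota : 'M[{poly k}]_(size f, size e)) (phi : 'M[{poly k}]_(size g, size f)) :=
  forall x y : k, (x, y) != (0, 0) ->
  [/\ (forall w : 'cV[k]_(size e), fiber iota x y *m w = 0 -> w = 0),
      (forall u : 'cV[k]_(size g), exists v, fiber phi x y *m v = u) &
      (forall v : 'cV[k]_(size f),
         fiber phi x y *m v = 0 <-> exists w, v = fiber iota x y *m w)].

Definition ses_splits (f g : seq int) (phi : 'M[{poly k}]_(size g, size f)) :=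
  exists sigma : 'M[{poly k}]_(size f, size g),
    @is_bundle_map g f sigma /\
    forall x y : k, (x, y) != (0, 0) ->
      fiber phi x y *m fiber sigma x y = 1%:M.

End Bundles.
Arguments is_bundle_map {k} c d M.
Arguments short_exact {k e f g}.
Arguments ses_splits {k f g}.

Definition dual_type (c : seq int) : seq int := map (fun x => - x) c.
Definition rkplus (c : seq int) : nat := count (fun x => 0 < x) c.

Definition Ftype (a b : seq int) : seq int := a ++ map (fun x => - x) b.

(* Main.v *)
Require Import Defs.
From HB Require Import structures.
From mathcomp Require Import all_boot all_order all_algebra.
From mathcomp Require Import zify ring lra.
Import Order.TTheory GRing.Theory Num.Theory.
Local Open Scope ring_scope.
Set Implicit Arguments. Unset Strict Implicit. Unset Printing Implicit Defensive.
Section LinAlg.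
Variable k : fieldType.

Lemma inj_row_full m n (A : 'M[k]_(m, n)) :
  (forall w : 'cV_n, A *m w = 0 -> w = 0) -> row_full A.
Proof.
move=> hA; rewrite /row_full -mxrank_tr.
have : kermx A^T == 0.
  apply/eqP/row_matrixP => i; rewrite row0.
  have : (row i (kermx A^T) <= kermx A^T)%MS by apply: row_sub.
  move/sub_kermxP => h.
  have : A *m (row i (kermx A^T))^T = 0.
    by apply: (can_inj (@trmxK _ _ _)); rewrite trmx_mul trmxK h trmx0.
  by move/hA => /(congr1 trmx); rewrite trmxK trmx0.
by rewrite kermx_eq0.
Qed.

Lemma rowvec0 n (X : 'M[k]_(1, n)) : (forall w : 'cV_n, X *m w = 0) -> X = 0.
Proof.
move=> h; apply/matrixP => i j; rewrite ord1 mxE.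
have := congr1 (fun A : 'M_1 => A 0 0) (h (delta_mx j 0)).
by rewrite -colE !mxE.
Qed.

Lemma dim_count m n (M0 : 'M[k]_(m,n)) (N0 : 'M_(1,m))
  (inj : forall w : 'cV_n, M0 *m w = 0 -> w = 0)
  (hNM : forall w : 'cV_n, N0 *m (M0 *m w) = 0)
  (hker : forall v : 'cV_m, N0 *m v = 0 -> exists w : 'cV_n, v = M0 *m w)
  (hN0 : N0 != 0) : n.+1 = m.
Proof.
have rM : \rank M0^T = n by rewrite mxrank_tr; apply/eqP/inj_row_full.
have rN : \rank N0^T = 1%N.
  apply/eqP; rewrite eqn_leq rank_leq_col lt0n mxrank_eq0.
  by apply: contra hN0 => /eqP /(congr1 trmx); rewrite trmxK trmx0 => ->.
have h1 : (M0^T <= kermx N0^T)%MS.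
  apply/sub_kermxP; rewrite -trmx_mul.
  have -> : N0 *m M0 = 0 by apply: rowvec0 => w; rewrite -mulmxA hNM.
  by rewrite trmx0.
have h2 : (kermx N0^T <= M0^T)%MS.
  apply/row_subP => i.
  have : (row i (kermx N0^T) <= kermx N0^T)%MS by apply: row_sub.
  move/sub_kermxP => h.
  have : N0 *m (row i (kermx N0^T))^T = 0.
    by apply: (can_inj (@trmxK _ _ _)); rewrite trmx_mul trmxK h trmx0.
  case/hker => w /(congr1 trmx); rewrite trmxK trmx_mul => ->.
  exact: submxMl.
have := mxrankS h1; have := mxrankS h2; rewrite mxrank_ker rM rN.
have := rank_leq_row N0^T; rewrite rN.
lia.
Qed.

Lemma XY_1 m r (hr : (r <= m)%N) :
  let X : 'M[k]_(m, r) := \matrix_(i, l) ((i : nat) == l)%:R in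
  let Y : 'M[k]_(r, m) := \matrix_(l, i) ((l : nat) == i)%:R in
  Y *m X = 1%:M.
Proof.
move=> X Y; apply/matrixP => l l'; rewrite !mxE.
rewrite (bigD1 (widen_ord hr l)) //= big1 ?addr0.
  by rewrite !mxE /= eqxx mul1r.
move=> i hi; rewrite !mxE; case: eqP => e; last by rewrite mul0r.
by move: hi; rewrite (_ : i = widen_ord hr l) ?eqxx //; apply/val_inj; rewrite /= e.
Qed.


Lemma card_count m n r (hr : (r <= m)%N) (M0 : 'M[k]_(m,n)) (P : {set 'I_n})
  (inj : forall w : 'cV_n, M0 *m w = 0 -> w = 0)
  (hzero : forall (i : 'I_m) (j : 'I_n), (r <= i)%N -> j \in P -> M0 i j = 0)
  (hlift : forall i0 : 'I_r, exists c : 'cV_n, (forall j, j \notin P -> c j 0 = 0) /\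
      forall i : 'I_m, (M0 *m c) i 0 = ((i : nat) == i0)%:R) :
  #|P| = r.
Proof.
pose X : 'M[k]_(m, r) := \matrix_(i, l) ((i : nat) == l)%:R.
pose Y : 'M[k]_(r, m) := \matrix_(l, i) ((l : nat) == i)%:R.
have YX : Y *m X = 1%:M by apply: XY_1.
pose Sel : 'M[k]_(n, #|P|) := \matrix_(j, l) (j == enum_val l)%:R.
have Selz : forall (z : 'cV_#|P|) l, (Sel *m z) (enum_val l) 0 = z l 0.
  move=> z l; rewrite !mxE (bigD1 l) //= big1 ?addr0 ?mxE ?eqxx ?mul1r //.
  move=> l' hl; rewrite !mxE; case: eqP => e; last by rewrite mul0r.
  by move: hl; rewrite (enum_val_inj e) eqxx.
have rMS : \rank (M0 *m Sel) = #|P|.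
  apply/eqP/inj_row_full => z; rewrite -mulmxA => /inj Sz.
  apply/matrixP => l i; rewrite ord1 -Selz Sz !mxE //.
apply/eqP; rewrite eqn_leq; apply/andP; split.
  have XYe : forall i i' : 'I_m, (X *m Y) i i' = ((i == i') && (i < r)%N)%:R.
    move=> i i'; rewrite !mxE.
    have [hi|hi] := ltnP i r.
      rewrite (bigD1 (Ordinal hi)) //= big1 ?addr0.
        by rewrite !mxE eqxx mul1r andbT.
      move=> l hl; rewrite !mxE; case: eqP => ee; last by rewrite mul0r.
      by move: hl; rewrite (_ : l = Ordinal hi) ?eqxx //; apply/val_inj; rewrite /= ee.
    rewrite andbF big1 // => l _; rewrite !mxE.
    by case: eqP => ee; rewrite ?mul0r //; move: (ltn_ord l); rewrite -ee ltnNge hi.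
  have e : M0 *m Sel = X *m (Y *m (M0 *m Sel)).
    apply/matrixP => i l; rewrite mulmxA [RHS]mxE (bigD1 i) //= big1 ?addr0.
      rewrite XYe eqxx /=; have [hi|hi] := ltnP i r; first by rewrite mul1r.
      rewrite mul0r !mxE (bigD1 (enum_val l)) //= big1 ?addr0 ?hzero ?mul0r //; first exact: enum_valP.
      by move=> j hj; rewrite !mxE (negPf hj) mulr0.
    by move=> i' hi'; rewrite XYe eq_sym (negPf hi') mul0r.
  by rewrite -{1}rMS e; apply: leq_trans (mxrankM_maxr _ _) (rank_leq_row _).
have [cf hcf] := fin_all_exists hlift.
pose C : 'M[k]_(#|P|, r) := \matrix_(l, i0) cf i0 (enum_val l) 0.
have SC : Sel *m C = \matrix_(j, i0) cf i0 j 0.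
  apply/matrixP => j i0; rewrite !mxE.
  have [jP|jP] := boolP (j \in P).
    rewrite (bigD1 (enum_rank_in jP j)) //= big1 ?addr0.
      by rewrite !mxE enum_rankK_in // eqxx mul1r.
    move=> l hl; rewrite !mxE; case: eqP => ee; rewrite ?mul0r //.
    by move: hl; rewrite -[X in X != _](enum_valK_in jP l) -ee eqxx.
  rewrite (proj1 (hcf i0)) // big1 // => l _; rewrite !mxE; case: eqP => ee; rewrite ?mul0r //.
  by move: jP; rewrite ee enum_valP.
have MSC : M0 *m Sel *m C = X.
  rewrite -mulmxA SC; apply/matrixP => i i0.
  have := (proj2 (hcf i0)) i; rewrite !mxE => <-.
  by apply: eq_bigr => j _; rewrite !mxE.
have := mxrankM_maxr Y X; rewrite YX mxrank1 -MSC => h.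
apply: leq_trans h _; apply: leq_trans (mxrankM_maxl _ _) _; exact: rank_leq_col.
Qed.

End LinAlg.

Section Lift.
Variable k : closedFieldType.
Local Notation ev x := (map_mx (horner_eval x)).

Lemma poly_all_roots (t : {poly k}) : (forall x, t.[x] = 0) -> t = 0.
Proof.
move=> ht.
have : size (t - 1) == 1%N.
  apply/negPn/negP => /closed_rootP [x]; rewrite /root hornerD hornerN hornerC ht.
  by rewrite sub0r oppr_eq0 oner_eq0.
case/size_poly1P => c c0 e.
have et : t = (c + 1)%:P by rewrite polyCD -e subrK.
by have := ht 0; rewrite et hornerC => ->.
Qed.

Lemma ev_scale x (d : {poly k}) m n (A : 'M[{poly k}]_(m, n)) :
  ev x (d *: A) = d.[x] *: ev x A.
Proof. by apply/matrixP => i j; rewrite !mxE /= horner_evalE hornerM. Qed.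

Lemma ev_mul x m n p (A : 'M[{poly k}]_(m, n)) (B : 'M[{poly k}]_(n, p)) :
  ev x (A *m B) = ev x A *m ev x B.
Proof. exact: map_mxM. Qed.

Lemma lift_reduce m n (M : 'M[{poly k}]_(m,n)) (v : 'cV_m)
  (inj : forall x (w : 'cV[k]_n), ev x M *m w = 0 -> w = 0) :
  forall N (d : {poly k}) (W : 'cV_n), (size d <= N)%N -> d != 0 ->
  M *m W = d *: v -> exists w, M *m w = v.
Proof.
elim=> [|N IH] d W hN d0 hW; first by move: hN; rewrite leqn0 size_poly_eq0 (negPf d0).
have [s1|s1] := eqVneq (size d) 1%N.
  move/eqP: s1 => /size_poly1P [c c0 ed].
  exists (c^-1%:P *: W); rewrite -scalemxAr hW ed scalerA -polyCM mulVf //.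
  by rewrite scale1r.
case/closed_rootP: s1 => x rx.
have hW0 : ev x W = 0.
  apply: (inj x); rewrite -ev_mul hW ev_scale (rootP rx) scale0r //.
set q := 'X - x%:P.
have q0 : q != 0 by rewrite polyXsubC_eq0.
have dW : forall i, q %| W i 0.
  move=> i; rewrite dvdp_XsubCl; apply/rootP.
  by have := congr1 (fun A : 'cV[k]_n => A i 0) hW0; rewrite !mxE.
pose W' := \col_i (W i 0 %/ q).
have eW : W = q *: W'.
  apply/matrixP => i j; rewrite ord1 !mxE mulrC divpK //.
have dd : q %| d by rewrite dvdp_XsubCl.
have ed : d = q * (d %/ q) by rewrite mulrC divpK.
set d' := d %/ q in ed *.
have d'0 : d' != 0 by move: d0; rewrite ed mulf_eq0 negb_or => /andP[].
apply: (IH d' W') => //.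
  by move: hN; rewrite ed size_mul // size_XsubC.
apply/matrixP => i j; have := congr1 (fun A : 'cV[{poly k}]_m => A i j) hW.
rewrite eW ed -scalemxAr -scalerA !mxE => /(mulfI q0).
by [].
Qed.


Lemma rowsub_mul m m' n p (f : 'I_m' -> 'I_m) (A : 'M[k]_(m, n)) (B : 'M_(n, p)) :
  rowsub f (A *m B) = rowsub f A *m B.
Proof. by apply/matrixP=> i j; rewrite !mxE; apply: eq_bigr => l _; rewrite !mxE. Qed.

Lemma lift m n (M : 'M[{poly k}]_(m,n)) (v : 'cV_m)
  (inj : forall x (w : 'cV[k]_n), ev x M *m w = 0 -> w = 0)
  (hv : forall x, exists w : 'cV[k]_n, ev x v = ev x M *m w) :
  exists w : 'cV[{poly k}]_n, M *m w = v.
Proof.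
have rf : row_full (ev 0 M) by apply: inj_row_full; apply: inj.
pose f := fullrankfun rf.
pose S := rowsub f M.
pose d := \det S.
have d0 : d != 0.
  apply/negP => /eqP d0.
  have := fullrowsub_unit rf; rewrite unitmxE unitfE -/f.
  rewrite -map_mxsub -/S det_map_mx /= horner_evalE -/d d0 horner0.
  by rewrite eqxx.
pose W := \adj S *m rowsub f v.
apply: (@lift_reduce m n M v inj (size d) d W) => //.
apply/matrixP => i j.
apply/eqP; rewrite -subr_eq0; apply/eqP; apply: poly_all_roots => x.
have [w0 hw0] := hv x.
have e1 : forall A : 'cV[{poly k}]_m, (A i j).[x] = ev x A i j by move=> A; rewrite mxE.
have eS : ev x S = rowsub f (ev x M) by rewrite map_mxsub.
have edx : \det (rowsub f (ev x M)) = d.[x].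
  by rewrite -eS det_map_mx.
rewrite hornerD hornerN !e1 ev_mul /W ev_mul map_mx_adj map_mxsub hw0 rowsub_mul.
rewrite eS.
rewrite [\adj _ *m _]mulmxA mul_adj_mx edx mul_scalar_mx -scalemxAr ev_scale hw0 !mxE subrr //.
Qed.

End Lift.

Section Deg.
Variable k : closedFieldType.

Lemma heval_10 (n : int) (p : {poly k}) : is_form n p -> heval n p 1 0 = p`_(absz n).
Proof.
move=> hp; rewrite /heval big_ord_recr /= subnn expr0 expr1n !mulr1.
rewrite big1 ?add0r // => l _.
by rewrite expr0n subn_eq0 leqNgt ltn_ord /= mulr0.
Qed.

Lemma heval_x1 (n : int) (p : {poly k}) x : is_form n p -> heval n p x 1 = p.[x].
Proof.
rewrite /heval; case: n => [n|n] /= hp.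
  rewrite (horner_coef_wide x hp); apply: eq_bigr => l _.
  by rewrite expr1n mulr1.
by move/eqP: hp => ->; rewrite horner0 big1 // => l _; rewrite coef0 !mul0r.
Qed.

Lemma coefM_top (t s : int) (p q : {poly k}) :
  is_form t p -> (forall l : nat, s < l%:Z -> q`_l = 0) -> 0 <= t + s ->
  (p * q)`_(absz (t + s)) = p`_(absz t) * (if 0 <= s then q`_(absz s) else 0).
Proof.
case: t => [t|t] /= hp hq hts; last first.
  by move/eqP: hp => ->; rewrite mul0r !coef0 mul0r.
have [hs|hs] := leP 0 s; last first.
  have -> : q = 0 by apply/polyP => l; rewrite coef0 hq //; lia.
  by rewrite mulr0 coef0 mulr0.
have [s' es] : exists s' : nat, s = s'%:Z by exists (absz s); rewrite abszE ger0_norm.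
subst s.
have -> : absz (t%:Z + s'%:Z) = (t + s')%N by lia.
have ht : (t < (t + s').+1)%N by lia.
rewrite coefM (bigD1 (Ordinal ht)) //= addKn big1 ?addr0 // => l hl.
have hl' : nat_of_ord l != t by apply: contraNneq hl => e; apply/eqP/val_inj.
case: (ltnP t l) => htl.
  by rewrite nth_default ?mul0r //; apply: leq_trans hp _.
rewrite (hq (t + s' - l)%N) ?mulr0 //; lia.
Qed.


Lemma absz_bnd (x : int) (K : nat) : (absz x <= K)%N -> - (K%:Z) <= x /\ x <= K%:Z.
Proof. case: x => [n|n] /= h; split; lia. Qed.

Lemma abszK0 (x : int) : 0 <= x -> (absz x)%:Z = x.
Proof. by case: x. Qed.

Lemma top_deg (c d : seq int) (M : 'M[{poly k}]_(size d, size c))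
  (hM : is_bundle_map c d M)
  (inf : forall u : 'cV[k]_(size c), fiber M 1 0 *m u = 0 -> u = 0)
  (w : 'cV[{poly k}]_(size c)) (v : 'cV_(size d)) (hw : M *m w = v)
  (hv : forall (i : 'I_(size d)) (N : nat), d`_i < N%:Z -> (v i 0)`_N = 0) :
  forall j : 'I_(size c), c`_j < 0 -> w j 0 = 0.
Proof.
move=> j1 cj1; apply/eqP/negPn/negP => wj1.
pose K := (\sum_(j < size c) absz (nth (0:int) c j))%N.
have hK : forall j : 'I_(size c), (absz (nth (0:int) c j) <= K)%N.
  move=> j; rewrite /K (bigD1 j) //=; exact: leq_addr.
pose sc j := absz ((size (w j 0))%:Z - c`_j + K%:Z).
case: (@arg_maxnP _ j1 (fun j => w j 0 != 0) sc wj1) => j0 wj0 hmax.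
have hcmp : forall j : 'I_(size c), w j 0 != 0 ->
    (size (w j 0))%:Z - c`_j <= (size (w j0 0))%:Z - c`_j0.
  move=> j /hmax; rewrite /sc => h.
  have := absz_bnd (hK j); have := absz_bnd (hK j0).
  move=> b0 b1; move: h; rewrite /geq /= -lez_nat !abszK0; lia.
pose D := (size (w j0 0))%:Z - 1 - c`_j0.
have s1 : (0 < size (w j1 0%R))%N by rewrite size_poly_gt0.
have hD : 1 <= D by have := hcmp j1 wj1; rewrite /D; lia.
have hdeg : forall (j : 'I_(size c)) (l : nat), c`_j + D < l%:Z -> (w j 0)`_l = 0.
  move=> j l hl; have [->|wj] := eqVneq (w j 0) 0; first by rewrite coef0.
  apply: nth_default; have := hcmp j wj; rewrite /D in hl; move=> h; move: hl h; set A := size (w j 0); set B := size (w j0 0); set C := c`_j; set E := c`_j0.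
  lia.
pose u := \col_j (if 0 <= c`_j + D then (w j 0)`_(absz (c`_j + D)%R) else 0).
have u0 : u j0 0 != 0.
  have s0 : (0 < size (w j0 0%R))%N by rewrite size_poly_gt0.
  have e : c`_j0 + D = (size (w j0 0)).-1%:Z by rewrite /D; lia.
  rewrite mxE e /= -lead_coefE lead_coef_eq0 //.
have : u = 0.
  apply: inf; apply/matrixP => i z; rewrite ord1 !mxE.
  have hij : forall j : 'I_(size c), fiber M 1 0 i j = (M i j)`_(absz (d`_i - c`_j)%R).
    by move=> j; rewrite mxE heval_10 //; apply: hM.
  have [hN|hN] := leP 0 (d`_i + D).
    have ev : (v i 0)`_(absz (d`_i + D)%R) = 0 by apply: hv; lia.
    rewrite -[X in _ = X]ev -hw mxE coef_sum; apply: eq_bigr => j _.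
    rewrite hij mxE.
    have -> : d`_i + D = (d`_i - c`_j) + (c`_j + D) by ring.
    apply/esym; rewrite coefM_top //; [by move=> l hl; apply: hdeg | lia].
  rewrite big1 // => j _; rewrite hij mxE.
  have := hM i j; case E : (d`_i - c`_j) => [t|t] /= hf.
    rewrite ifF ?mulr0 //; apply/negbTE; rewrite -ltNge.
    move: E hN; set C := c`_j; set X := d`_i; lia.
  by move/eqP: hf => ->; rewrite coef0 mul0r.
by move=> eu; move: u0; rewrite eu mxE eqxx.
Qed.

End Deg.

Section Main.
Variable k : closedFieldType.
Local Notation ev x := (map_mx (horner_eval x)).

Lemma is_form0 (n : int) : is_form n (0 : {poly k}).
Proof. by case: n => n /=; rewrite ?size_poly0 ?eqxx. Qed.

Lemma is_form_neg (n : int) (p : {poly k}) : n < 0 -> is_form n p -> p = 0.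
Proof. by case: n => n //= _ /eqP. Qed.

Lemma heval0 (n : int) (x y : k) : heval n 0 x y = 0.
Proof. by rewrite /heval big1 // => l _; rewrite coef0 !mul0r. Qed.

Lemma heval_0 (p : {poly k}) (x y : k) : heval 0 p x y = p`_0.
Proof. by rewrite /heval big_ord1 /= !expr0 !mulr1. Qed.

Lemma fiber_x1 (c d : seq int) (M : 'M[{poly k}]_(size d, size c)) x :
  is_bundle_map c d M -> fiber M x 1 = ev x M.
Proof. by move=> hM; apply/matrixP => i j; rewrite !mxE heval_x1 //; apply: hM. Qed.

End Main.

Local Notation ev x := (map_mx (horner_eval x)).

Theorem lemma2p7 (k : closedFieldType) (a b e : seq int)
  (ha : all (fun x : int => 0 <= x) a) (hb : all (fun x : int => 0 < x) b)
  (hs : (0 < size b)%N)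
  (iota : 'M[{poly k}]_(size (Ftype a b), size e))
  (phi : 'M[{poly k}]_(size [:: 0 : int], size (Ftype a b)))
  (hiota : is_bundle_map e (Ftype a b) iota)
  (hphi : is_bundle_map (Ftype a b) [:: 0] phi)
  (hex : short_exact iota phi)
  (hns : ~ ses_splits phi) :
  rkplus (dual_type e) = (size b).-1.
Proof.
have sF : size (Ftype a b) = (size a + size b)%N by rewrite size_cat size_map.
have Fa : forall i : nat, (i < size a)%N -> (Ftype a b)`_i = a`_i.
  by move=> i hi; rewrite nth_cat hi.
have Fa0 : forall i : nat, (i < size a)%N -> 0 <= (Ftype a b)`_i.
  by move=> i hi; rewrite Fa //; move/all_nthP: ha; apply.
have Fb : forall i : nat, (size a <= i)%N -> (i < size (Ftype a b))%N -> (Ftype a b)`_i < 0.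
  move=> i h1 h2; have hi : (i - size a < size b)%N by rewrite ltn_subLR // -sF.
  rewrite nth_cat ltnNge h1 /= (nth_map 0) //.
  have hbj : 0 < b`_(i - size a) by apply: (all_nthP 0 hb).
  by move: hbj; set t := b`_(i - size a); lia.
have pt : forall x : k, (x, 1 : k) != (0, 0) by move=> x; rewrite xpair_eqE oner_eq0 andbF.
have pt10 : ((1 : k), (0 : k)) != (0, 0) by rewrite xpair_eqE oner_eq0.
(* non-split: the O(a_i)-components of phi vanish *)
have phiA : forall i : 'I_(size (Ftype a b)), (i < size a)%N -> phi 0 i = 0.
  move=> i hi; apply/eqP/negPn/negP => nz; apply: hns.
  have hf := hphi 0 i; rewrite /= sub0r in hf.
  have a0 : (Ftype a b)`_i = 0.
    have := Fa0 i hi; case E : ((Ftype a b)`_i) => [[|t]|t] //= _.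
    by move: hf; rewrite E (_ : - (t.+1%:Z) = Negz t) //= => /eqP; move/eqP: nz.
  have s1 : size (phi 0 i) == 1%N.
    by move: hf; rewrite a0 oppr0 /= => hf; rewrite eqn_leq hf size_poly_gt0 nz.
  case/size_poly1P: s1 => c c0 ep.
  pose sigma : 'M[{poly k}]_(size (Ftype a b), size [:: 0 : int]) :=
    \matrix_(l, z) (if l == i then c^-1%:P else 0).
  exists sigma; split.
    move=> l z; rewrite mxE; case: eqP => [->|_]; last exact: is_form0.
    by rewrite ord1 /= subr0 a0 /= size_polyC_leq1.
  move=> x y _; apply/matrixP => z z'; rewrite !ord1 !mxE (bigD1 i) //= big1 ?addr0.
    rewrite !mxE eqxx /= sub0r subr0 a0 oppr0 !heval_0 ep coefC coefC /=.
    by rewrite mulfV.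
  by move=> l hl; rewrite !mxE (negPf hl) heval0 mulr0.
have inj1 : forall (x : k) (w : 'cV[k]_(size e)), ev x iota *m w = 0 -> w = 0.
  by move=> x; rewrite -(fiber_x1 x hiota); case: (hex x 1 (pt x)).
have injinf : forall u : 'cV[k]_(size e), fiber iota 1 0 *m u = 0 -> u = 0.
  by case: (hex 1 0 pt10).
have ker1 : forall (x : k) (v : 'cV[k]_(size (Ftype a b))),
    ev x phi *m v = 0 <-> exists w, v = ev x iota *m w.
  by move=> x v; rewrite -(fiber_x1 x hiota) -(fiber_x1 x hphi); case: (hex x 1 (pt x)).
pose P := [set j : 'I_(size e) | 0 <= e`_j].
have hsa : (size a <= size (Ftype a b))%N by rewrite sF leq_addr.
have cardP : #|P| = size a.
  apply: (@card_count _ _ _ _ hsa (ev 0 iota)).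
  - exact: inj1.
  - move=> i j hi; rewrite inE => hj; rewrite mxE; apply/eqP.
    rewrite /= horner_evalE (is_form_neg _ (hiota i j)) ?horner0 //.
    by have := Fb i hi (ltn_ord i); move: hj; set t := e`_j; set t' := (Ftype a b)`_i; lia.
  move=> i0.
  pose ii := widen_ord hsa i0.
  pose v : 'cV[{poly k}]_(size (Ftype a b)) := \col_l ((l == ii)%:R : k)%:P.
  have hv : forall x, exists w0, ev x v = ev x iota *m w0.
    move=> x; have [h _] := ker1 x (ev x v).
    apply: h.
    apply/matrixP => z l; rewrite ord1 !mxE (bigD1 ii) //= big1 ?addr0.
      by rewrite !mxE horner_evalE (_ : phi _ ii = 0) ?horner0 ?mul0r //; exact: (phiA ii (ltn_ord i0)).
    by move=> l' hl'; rewrite !mxE (negPf hl') /= !horner_evalE hornerC mulr0.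
  have [w hw] := lift inj1 hv.
  have wz := top_deg hiota injinf hw.
  have wz' : forall j : 'I_(size e), e`_j < 0 -> w j 0 = 0.
    apply: wz => i N hN; rewrite mxE coefC.
    case: eqP => [N0|]; last by [].
    case: eqP => [eii|]; last by [].
    by move: hN; rewrite N0 eii; have := Fa0 ii (ltn_ord i0); set t := (Ftype a b)`_ii; lia.
  exists (ev 0 w); split.
    move=> j; rewrite inE -ltNge => hj; by rewrite mxE /= horner_evalE wz' // horner0.
  move=> i; rewrite -ev_mul hw !mxE /= horner_evalE hornerC.
  by [].
have dim : (size e).+1 = size (Ftype a b).
  apply: (@dim_count _ _ _ (ev 0 iota) (ev 0 phi)).
  - exact: inj1.
  - by move=> w; apply/(ker1 0); exists w.
  - by move=> v /(ker1 0).
  apply/negP => /eqP N0.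
  have [_ hsurj _] := hex 0 1 (pt 0).
  have [v hv] := hsurj (const_mx 1).
  move: hv; rewrite (fiber_x1 0 hphi) N0 mul0mx => /matrixP /(_ 0 0).
  by rewrite !mxE => /eqP; rewrite eq_sym oner_eq0.
have cnt : #|P| = count (fun x : int => 0 <= x) e.
  rewrite -sum1_card -sum1_count (big_nth 0) big_mkord.
  by apply: eq_bigl => j; rewrite inE.
rewrite /rkplus /dual_type count_map.
have := count_predC (fun x : int => 0 <= x) e.
rewrite -cnt cardP (eq_count (a2 := predC (fun x : int => 0 <= x))); last first.
  by move=> x /=; rewrite oppr_gt0 ltNge.
move: dim; rewrite sF; lia.
Qed.
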